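(* Let $\Xi=\{(x_1,x_2)\in\mathbb{R}^2: x_1,x_2\ge 0,\ x_1+x_2\le 1\}$, write $x_0=1-x_1-x_2$, and for $\beta>0$ let $$F_\beta(x_1,x_2)\;=\;-\frac12\Big|\sum_{k=0}^2 x_k\mathbf{v}_k\Big|^2+\frac1\beta\sum_{k=0}^2 x_k\log(3x_k),$$ where $\mathbf{v}_k=(\cos(2\pi k/3),\sin(2\pi k/3))$. Let $\mathbf{p}=(1/3,1/3)$. Then $\mathbf{p}$ is a critical point of $F_\beta$ for every $\beta>0$; it is a local minimum of $F_\beta$ for $\beta<\beta_1:=2$, and a local maximum of $F_\beta$ for $\beta>2$.
   Context: Convention: $0\log 0=0$. Equivalently $F_\beta(\mathbf{x})=\frac14-\frac34\sum_{k=0}^2x_k^2+\frac1\beta\sum_{k=0}^2x_k\log(3x_k)$. *)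

(* Defs.v *)
From Stdlib Require Import Reals.
From Coquelicot Require Import Coquelicot.
Open Scope R_scope.

Definition xlog3 (t : R) : R := if Req_EM_T t 0 then 0 else t * ln (3 * t).

Definition vk (k : nat) : R * R :=
  (cos (2 * PI * INR k / 3), sin (2 * PI * INR k / 3)).

Definition in_Xi (x : R * R) : Prop :=
  0 <= fst x /\ 0 <= snd x /\ fst x + snd x <= 1.

Definition F (beta : R) (x : R * R) : R :=
  let x1 := fst x in let x2 := snd x in let x0 := 1 - x1 - x2 in
  let m1 := x0 * fst (vk 0) + x1 * fst (vk 1) + x2 * fst (vk 2) in
  let m2 := x0 * snd (vk 0) + x1 * snd (vk 1) + x2 * snd (vk 2) in
  - / 2 * (m1 ^ 2 + m2 ^ 2) + / beta * (xlog3 x0 + xlog3 x1 + xlog3 x2).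

Definition pt : R * R := (1 / 3, 1 / 3).

Definition critical_point (f : R * R -> R) (x : R * R) : Prop :=
  filterdiff f (locally x) (fun _ => 0).

Definition local_min_on_Xi (f : R * R -> R) (x : R * R) : Prop :=
  locally x (fun y => in_Xi y -> f x <= f y).
Definition local_max_on_Xi (f : R * R -> R) (x : R * R) : Prop :=
  locally x (fun y => in_Xi y -> f y <= f x).

(* Main.v *)
Require Import Defs.
From Stdlib Require Import Reals Lra Psatz.
From Coquelicot Require Import Coquelicot.
Open Scope R_scope.

Lemma vk0 : vk 0 = (1, 0).
Proof. unfold vk. simpl. replace (2 * PI * 0 / 3) with 0 by field. rewrite cos_0, sin_0. reflexivity. Qed.
Lemma vk1 : vk 1 = (-(1/2), sqrt 3 / 2).
Proof. unfold vk. simpl. replace (2 * PI * 1 / 3) with (PI - PI/3) by field.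
  rewrite Rtrigo_facts.cos_pi_minus, sin_PI_x, cos_PI3, sin_PI3. reflexivity. Qed.
Lemma vk2 : vk 2 = (-(1/2), -(sqrt 3 / 2)).
Proof. unfold vk. simpl. replace (2 * PI * (1 + 1) / 3) with (PI/3 + PI) by field.
  rewrite neg_cos, neg_sin, cos_PI3, sin_PI3. reflexivity. Qed.

Definition Qf (y : R * R) := (fst y - 1/3)^2 + (fst y - 1/3)*(snd y - 1/3) + (snd y - 1/3)^2.

Lemma F_eq beta y : F beta y = -(3/2) * Qf y +
   / beta * (xlog3 (1 - fst y - snd y) + xlog3 (fst y) + xlog3 (snd y)).
Proof.
  unfold F, Qf. rewrite vk0, vk1, vk2. cbn [fst snd].
  assert (Hs : sqrt 3 * sqrt 3 = 3) by (apply sqrt_sqrt; lra).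
  set (s := sqrt 3) in *. set (x1 := fst y). set (x2 := snd y).
  f_equal.
  replace (((1 - x1 - x2) * 0 + x1 * (s / 2) + x2 * - (s / 2)) ^ 2) with
    ((s * s) * ((x1 - x2)^2/4)) by field. rewrite Hs. field.
Qed.

Lemma ln_up y : 0 < y -> ln y <= y - 1.
Proof. intros. rewrite <- (ln_exp (y-1)). apply ln_le; auto. pose proof (exp_ineq1_le (y-1)). lra. Qed.
Lemma ln_low y : 0 < y -> 1 - / y <= ln y.
Proof. intros. pose proof (ln_up (/y) (Rinv_0_lt_compat _ H)). rewrite ln_Rinv in H0; lra. Qed.

Lemma gen_mvt (G dG : R -> R) d : 0 < d ->
  (forall x, -d <= x <= d -> is_derive G x (dG x)) ->
  (forall x, 0 <= x <= d -> 0 <= dG x) ->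
  (forall x, -d <= x <= 0 -> dG x <= 0) ->
  forall u, -d <= u <= d -> G 0 <= G u.
Proof.
  intros Hd HD Hp Hn u Hu.
  assert (Hc : forall x, -d <= x <= d -> continuity_pt G x).
  { intros x Hx. apply continuity_pt_filterlim. exact (ex_derive_continuous G x (ex_intro _ _ (HD x Hx))). }
  destruct (MVT_gen G 0 u dG) as [c [Hc1 Hc2]].
  - intros x Hx. apply HD. unfold Rmin, Rmax in Hx. destruct (Rle_dec 0 u); lra.
  - intros x Hx. apply Hc. unfold Rmin, Rmax in Hx. destruct (Rle_dec 0 u); lra.
  - unfold Rmin, Rmax in Hc1. destruct (Rle_dec 0 u).
    + assert (0 <= dG c) by (apply Hp; lra). nra.
    + assert (dG c <= 0) by (apply Hn; lra). nra.
Qed.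

Lemma flow d u : 0 < d < 1 -> -d <= u <= d ->
  u + u^2 / (2 * (1 + d)) <= (1 + u) * ln (1 + u).
Proof.
  intros Hd Hu.
  assert (H := gen_mvt (fun u => (1 + u) * ln (1 + u) - u - u^2 / (2*(1+d)))
     (fun u => ln (1 + u) - u / (1 + d)) d (proj1 Hd)).
  cbv beta in H.
  assert (H' : (1 + 0) * ln (1 + 0) - 0 - 0 ^ 2 / (2 * (1 + d)) <=
     (1 + u) * ln (1 + u) - u - u ^ 2 / (2 * (1 + d))).
  { apply H; auto.
    - intros x Hx. auto_derive. lra. field. lra.
    - intros x Hx. pose proof (ln_low (1+x)).
      assert (E: 1 - /(1+x) - x/(1+d) = x*(d-x) / ((1+x)*(1+d))) by (field; lra).
      assert (0 <= x*(d-x) / ((1+x)*(1+d))).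
      { unfold Rdiv; apply Rmult_le_pos; [nra | left; apply Rinv_0_lt_compat; nra]. }
      assert (0 < 1 + x) by lra. lra.
    - intros x Hx. pose proof (ln_up (1+x)).
      assert (E: x - x/(1+d) = x*d / (1+d)) by (field; lra).
      assert (x*d / (1+d) <= 0).
      { unfold Rdiv. assert (0 < /(1+d)) by (apply Rinv_0_lt_compat; lra). nra. }
      assert (0 < 1 + x) by lra. lra. }
  replace ((1 + 0) * ln (1 + 0) - 0 - 0 ^ 2 / (2 * (1 + d))) with 0 in H'
    by (rewrite Rplus_0_r, ln_1; field; lra).
  lra.
Qed.

Lemma fup d u : 0 < d < 1 -> -d <= u <= d ->
  (1 + u) * ln (1 + u) <= u + u^2 / (2 * (1 - d)).
Proof.
  intros Hd Hu.
  assert (H := gen_mvt (fun u => u + u^2 / (2*(1-d)) - (1 + u) * ln (1 + u))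
     (fun u => u / (1 - d) - ln (1 + u)) d (proj1 Hd)).
  cbv beta in H.
  assert (H' : 0 + 0 ^ 2 / (2 * (1 - d)) - (1 + 0) * ln (1 + 0) <=
     u + u ^ 2 / (2 * (1 - d)) - (1 + u) * ln (1 + u)).
  { apply H; auto.
    - intros x Hx. auto_derive. lra. field. lra.
    - intros x Hx. pose proof (ln_up (1+x)).
      assert (E: x/(1-d) - x = x*d / (1-d)) by (field; lra).
      assert (0 <= x*d / (1-d)).
      { unfold Rdiv. assert (0 < /(1-d)) by (apply Rinv_0_lt_compat; lra). nra. }
      assert (0 < 1 + x) by lra. lra.
    - intros x Hx. pose proof (ln_low (1+x)).
      assert (E: x/(1-d) - (1 - /(1+x)) = x*(x+d) / ((1+x)*(1-d))) by (field; lra).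
      assert (x*(x+d) / ((1+x)*(1-d)) <= 0).
      { unfold Rdiv. assert (0 < /((1+x)*(1-d))) by (apply Rinv_0_lt_compat, Rmult_lt_0_compat; lra).
        assert (x*(x+d) <= 0) by nra. nra. }
      assert (0 < 1 + x) by lra. lra. }
  replace (0 + 0 ^ 2 / (2 * (1 - d)) - (1 + 0) * ln (1 + 0)) with 0 in H'
    by (rewrite Rplus_0_r, ln_1; field; lra).
  lra.
Qed.

Lemma xbound d t : 0 < d < 1 -> -d <= 3 * t - 1 <= d ->
  3 * (t - 1/3)^2 <= (xlog3 t - (t - 1/3)) * (2 * (1 + d)) /\
  (xlog3 t - (t - 1/3)) * (2 * (1 - d)) <= 3 * (t - 1/3)^2.
Proof.
  intros Hd Ht.
  assert (Hl := flow d (3*t-1) Hd Ht). assert (Hu := fup d (3*t-1) Hd Ht).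
  unfold xlog3. destruct (Req_EM_T t 0) as [E|E]; [subst; lra|].
  replace (1 + (3*t-1)) with (3*t) in * by ring.
  set (L := 3 * t * ln (3 * t)) in *.
  replace (t * ln (3 * t)) with (L/3) by (unfold L; field).
  assert (E1 : (3 * t - 1) ^ 2 / (2 * (1 + d)) * (2*(1+d)) = (3*t-1)^2) by (field; lra).
  assert (E2 : (3 * t - 1) ^ 2 / (2 * (1 - d)) * (2*(1-d)) = (3*t-1)^2) by (field; lra).
  split; nra.
Qed.

Lemma Fbounds beta d y : 0 < d < 1 ->
  -(d/6) <= fst y - 1/3 <= d/6 -> -(d/6) <= snd y - 1/3 <= d/6 ->
  exists E, F beta y = -(3/2) * Qf y + / beta * E /\
    3 * Qf y <= E * (1 + d) /\ E * (1 - d) <= 3 * Qf y.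
Proof.
  intros Hd H1 H2. rewrite F_eq.
  eexists; split; [reflexivity|].
  destruct (xbound d (fst y) Hd) as [A1 B1]; [lra|].
  destruct (xbound d (snd y) Hd) as [A2 B2]; [lra|].
  destruct (xbound d (1 - fst y - snd y) Hd) as [A0 B0]; [lra|].
  unfold Qf. split; nra.
Qed.

Lemma Fpt beta : F beta pt = 0.
Proof.
  rewrite F_eq. unfold Qf, pt, xlog3; cbn [fst snd].
  replace (1 - 1/3 - 1/3) with (1/3) by field.
  destruct (Req_EM_T (1/3) 0); [lra|].
  replace (3 * (1/3)) with 1 by field. rewrite ln_1. ring.
Qed.

Lemma ball_pt (r : posreal) y : ball pt r y ->
  -r < fst y - 1/3 < r /\ -r < snd y - 1/3 < r.
Proof.
  intros [H1 H2].
  assert (A1 : Rabs (fst y - 1/3) < r) by exact H1.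
  assert (A2 : Rabs (snd y - 1/3) < r) by exact H2.
  apply Rabs_def2 in A1. apply Rabs_def2 in A2. lra.
Qed.

Lemma Qf_nonneg y : 0 <= Qf y.
Proof. unfold Qf. pose proof (pow2_ge_0 (fst y - 1/3 + (snd y - 1/3))). pose proof (pow2_ge_0 (fst y - 1/3)). pose proof (pow2_ge_0 (snd y - 1/3)). nra. Qed.

Lemma part_min beta : 0 < beta -> beta < 2 -> local_min_on_Xi (F beta) pt.
Proof.
  intros Hb Hb2.
  set (d := (2 - beta) / (2 + beta)).
  assert (Hd1 : d * (2 + beta) = 2 - beta) by (unfold d; field; lra).
  assert (Hd : 0 < d < 1) by (split; nra).
  assert (Hr : 0 < d / 6) by lra.
  red; unfold locally. exists (mkposreal _ Hr). intros y Hy _.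
  apply ball_pt in Hy. simpl in Hy. destruct Hy as [Hy1 Hy2].
  destruct (Fbounds beta d y Hd) as [E [HF [HL HU]]]; [lra|lra|].
  rewrite HF, Fpt. pose proof (Qf_nonneg y).
  assert (H4 : 3 * Qf y * (2 + beta) <= E * 4) by nra.
  assert (H5 : 3 / 2 * beta * Qf y <= E) by nra.
  assert (H6 : / beta * (3 / 2 * beta * Qf y) <= / beta * E).
  { apply Rmult_le_compat_l; auto. left; apply Rinv_0_lt_compat; lra. }
  replace (/ beta * (3 / 2 * beta * Qf y)) with (3/2 * Qf y) in H6 by (field; lra).
  lra.
Qed.

Lemma part_max beta : 2 < beta -> local_max_on_Xi (F beta) pt.
Proof.
  intros Hb.
  set (d := (beta - 2) / beta).
  assert (Hd1 : d * beta = beta - 2) by (unfold d; field; lra).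
  assert (Hd : 0 < d < 1) by (split; nra).
  assert (Hr : 0 < d / 6) by lra.
  red; unfold locally. exists (mkposreal _ Hr). intros y Hy _.
  apply ball_pt in Hy. simpl in Hy. destruct Hy as [Hy1 Hy2].
  destruct (Fbounds beta d y Hd) as [E [HF [HL HU]]]; [lra|lra|].
  rewrite HF, Fpt. pose proof (Qf_nonneg y).
  assert (H4 : E * 2 <= 3 * Qf y * beta) by nra.
  assert (H6 : / beta * (E * 2) <= / beta * (3 * Qf y * beta)).
  { apply Rmult_le_compat_l; auto. left; apply Rinv_0_lt_compat; lra. }
  replace (/ beta * (3 * Qf y * beta)) with (3 * Qf y) in H6 by (field; lra).
  lra.
Qed.

Lemma norm_sub (y : R * R) :
  @norm R_AbsRing (prod_NormedModule R_AbsRing R_NormedModule R_NormedModule) (minus y pt)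
  = sqrt ((fst y - 1/3)^2 + (snd y - 1/3)^2).
Proof.
  destruct y as [y1 y2].
  change (sqrt (Rabs (y1 - 1/3) ^ 2 + Rabs (y2 - 1/3) ^ 2) = sqrt ((y1 - 1/3)^2 + (y2 - 1/3)^2)).
  rewrite !pow2_abs. reflexivity.
Qed.

Lemma Qaux a b : (a^2 + a*b + b^2) <= 3/2 * (a^2 + b^2).
Proof. pose proof (pow2_ge_0 (a - b)). nra. Qed.

Lemma part_crit beta : 0 < beta -> critical_point (F beta) pt.
Proof.
  intros Hb. unfold critical_point, filterdiff. split.
  - exact (@is_linear_zero R_AbsRing (prod_NormedModule R_AbsRing R_NormedModule R_NormedModule) R_NormedModule).
  - intros x Hx. apply (@is_filter_lim_locally_unique R_AbsRing (prod_NormedModule R_AbsRing R_NormedModule R_NormedModule)) in Hx. subst x.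
    intros eps.
    set (C := 3/2 + 6/beta).
    assert (HC : 0 < C) by (unfold C; assert (0 < 6/beta) by (apply Rdiv_lt_0_compat; lra); lra).
    set (r := Rmin (1/12) (eps / (3 * C))).
    assert (Hr : 0 < r).
    { unfold r. apply Rmin_glb_lt; [lra|]. apply Rdiv_lt_0_compat; [apply cond_pos|lra]. }
    exists (mkposreal _ Hr). intros y Hy.
    apply ball_pt in Hy. simpl in Hy. destruct Hy as [Hy1 Hy2].
    rewrite norm_sub. destruct y as [y1 y2]. cbn [fst snd] in *.
    assert (G : Rabs (F beta (y1, y2) - F beta pt - 0) <=
       eps * sqrt ((y1 - 1/3)^2 + (y2 - 1/3)^2)).
    2: exact G.
    rewrite Fpt, !Rminus_0_r.
    assert (Hr1 : r <= 1/12) by apply Rmin_l.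
    assert (Hr2 : r <= eps / (3 * C)) by apply Rmin_r.
    destruct (Fbounds beta (1/2) (y1, y2)) as [E [HF [HL HU]]]; [lra|simpl; lra|simpl; lra|].
    rewrite HF. pose proof (Qf_nonneg (y1, y2)) as HQ.
    assert (HQb : Qf (y1, y2) <= 3/2 * ((y1 - 1/3)^2 + (y2 - 1/3)^2)).
    { unfold Qf. cbn [fst snd]. apply Qaux. }
    set (Q := Qf (y1, y2)) in *.
    set (a := y1 - 1/3) in *. set (b := y2 - 1/3) in *.
    set (N := sqrt (a^2 + b^2)).
    assert (HN0 : 0 <= N) by apply sqrt_pos.
    assert (HN2 : N * N = a^2 + b^2) by (apply sqrt_sqrt; nra).
    assert (0 <= (r-a)*(r+a)) by (apply Rmult_le_pos; lra).
    assert (0 <= (r-b)*(r+b)) by (apply Rmult_le_pos; lra).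
    assert (a^2 <= r^2) by nra. assert (b^2 <= r^2) by nra.
    assert (HN : N <= 2 * r) by nra.
    assert (Hib : 0 < / beta) by (apply Rinv_0_lt_compat; lra).
    assert (HE1 : 0 <= / beta * E) by nra.
    assert (HE2 : / beta * E <= 6 / beta * Q) by (unfold Rdiv; nra).
    assert (HCQ : Rabs (-(3/2) * Q + / beta * E) <= C * Q).
    { apply Rabs_le. unfold C. nra. }
    assert (H3 : 3 * C * r <= eps).
    { assert (3 * C * (eps / (3 * C)) = eps) by (field; lra). nra. }
    assert (C * Q <= C * (3/2 * (N * N))) by (rewrite HN2; nra).
    assert (N * N <= 2 * r * N) by nra.
    assert (C * (3/2 * (N * N)) <= 3 * C * r * N) by nra.
    assert (3 * C * r * N <= eps * N) by nra.
    lra.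
Qed.

Theorem lemma4p1 :
  (forall beta : R, 0 < beta -> critical_point (F beta) pt) /\
  (forall beta : R, 0 < beta -> beta < 2 -> local_min_on_Xi (F beta) pt) /\
  (forall beta : R, 2 < beta -> local_max_on_Xi (F beta) pt).
Proof.
  split; [exact part_crit|split; [exact part_min|exact part_max]].
Qed.
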